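(* Let $P$ be a projection algebra, let $p,q\in P$, and put $p'=q\delta_p$ and $q'=p\theta_q$. Then: (i) $p'\le p$, $q'\le q$ and $p'\,\mathscr F\,q'$; (ii) $\theta_p\theta_q=\theta_{p'}\theta_{q'}$ and $\delta_q\delta_p=\delta_{q'}\delta_{p'}$; (iii) if $p\le r\,\mathscr F\,q$ for some $r\in P$, then $p'=p$; (iv) if $p\,\mathscr F\,s\ge q$ for some $s\in P$, then $q'=q$.
   Context: Maps are written to the right of their arguments and composed left to right ($p\,\alpha\beta=(p\alpha)\beta$). A projection algebra is a set $P$ with maps $\theta_p,\delta_p:P\to P$ ($p\in P$) such that for all $p,q\in P$: $p\theta_p=p$, $p\delta_p=p$; $p\theta_{q\theta_p}=q\theta_p$, $p\delta_{q\delta_p}=q\delta_p$; $\theta_q\theta_{q\theta_p}=\theta_q\theta_p$, $\delta_q\delta_{q\delta_p}=\delta_q\delta_p$; $\theta_p\delta_p=\theta_p$, $\delta_p\theta_p=\delta_p$; $\theta_{p\delta_q}\theta_p=\theta_q\theta_p$, $\delta_{p\theta_q}\delta_p=\delta_q\delta_p$. The partial order is $p\le q\iff p=p\theta_q$ (equivalently $p=p\delta_q$), and $p\,\mathscr F\,q$ means $p=q\delta_p$ and $q=p\theta_q$. *)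

(* Defs.v *)
(* Maps act on the right: "x theta_p" is written [theta P p x],
   and the composite map "theta_p theta_q" sends x to (x theta_p) theta_q,
   i.e. [theta P q (theta P p x)].  Equalities of maps are stated pointwise. *)

Record ProjAlg := {
  carrier :> Type;
  theta : carrier -> carrier -> carrier;
  delta : carrier -> carrier -> carrier;
  ax_theta_id : forall p, theta p p = p;
  ax_delta_id : forall p, delta p p = p;
  ax_theta2 : forall p q, theta (theta p q) p = theta p q;
  ax_delta2 : forall p q, delta (delta p q) p = delta p q;
  ax_theta3 : forall p q x, theta (theta p q) (theta q x) = theta p (theta q x);
  ax_delta3 : forall p q x, delta (delta p q) (delta q x) = delta p (delta q x);
  ax_td : forall p x, delta p (theta p x) = theta p x;
  ax_dt : forall p x, theta p (delta p x) = delta p x;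
  ax_theta4 : forall p q x, theta p (theta (delta q p) x) = theta p (theta q x);
  ax_delta4 : forall p q x, delta p (delta (theta q p) x) = delta p (delta q x)
}.

Arguments theta {_} _ _.
Arguments delta {_} _ _.

Definition pa_le {P : ProjAlg} (p q : P) : Prop := p = theta q p.

Definition pa_F {P : ProjAlg} (p q : P) : Prop := p = delta p q /\ q = theta q p.

(* Main.v *)
Require Import Defs.
From Stdlib Require Import Setoid.

Section S.
Variable P : ProjAlg.

Lemma th_idem (q x : P) : theta q (theta q x) = theta q x.
Proof. rewrite <- (ax_td P q x) at 1. rewrite ax_dt. apply ax_td. Qed.

Lemma de_idem (q x : P) : delta q (delta q x) = delta q x.
Proof. rewrite <- (ax_dt P q x) at 1. rewrite ax_td. apply ax_dt. Qed.

Lemma le_de (a b : P) : pa_le a b -> a = delta b a.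
Proof. unfold pa_le; intro H. rewrite H at 2. rewrite ax_td. exact H. Qed.

Lemma le_de' (a b : P) : a = delta b a -> pa_le a b.
Proof. unfold pa_le; intro H. rewrite H at 2. rewrite ax_dt. exact H. Qed.

Lemma le_bde (a b : P) : pa_le a b -> delta a b = a.
Proof. intro H. pose proof (le_de a b H) as H1. rewrite H1 at 1.
  rewrite (ax_delta2 P b a). congruence. Qed.

Lemma le_bth (a b : P) : pa_le a b -> theta a b = a.
Proof. intro H. unfold pa_le in H. rewrite H at 1.
  rewrite (ax_theta2 P b a). congruence. Qed.

Lemma le_dd (a b x : P) : pa_le a b -> delta a (delta b x) = delta a x.
Proof. intro H. rewrite <- (ax_delta4 P a b x). unfold pa_le in H.
  rewrite <- H. apply de_idem. Qed.

Lemma le_tt (a b x : P) : pa_le a b -> theta a (theta b x) = theta a x.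
Proof. intro H. rewrite <- (ax_theta4 P a b x). rewrite <- (le_de a b H).
  apply th_idem. Qed.
End S.

Theorem lemma4p12 (P : ProjAlg) (p q : P) :
  let p' := delta p q in   (* p' = q delta_p *)
  let q' := theta q p in   (* q' = p theta_q *)
  (pa_le p' p /\ pa_le q' q /\ pa_F p' q') /\
  ((forall x : P, theta q (theta p x) = theta q' (theta p' x)) /\
   (forall x : P, delta p (delta q x) = delta p' (delta q' x))) /\
  (forall r : P, pa_le p r -> pa_F r q -> p' = p) /\
  (forall s : P, pa_F p s -> pa_le q s -> q' = q).
Proof.
  intros p' q'.
  assert (Hp' : pa_le p' p) by (unfold pa_le, p'; symmetry; apply ax_dt).
  assert (Hq' : pa_le q' q) by (unfold pa_le, q'; symmetry; apply th_idem).
  assert (E1 : delta p q' = p').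
  { pose proof (le_bde _ _ _ Hq') as H. unfold q' in H |- *.
    rewrite <- H at 1. unfold p'. rewrite (ax_delta4 P p q q). rewrite ax_delta_id. reflexivity. }
  assert (E2 : theta q p' = q').
  { assert (H : pa_le p' p) by exact Hp'.
    apply le_de in H. apply le_de' in H.
    pose proof (le_bth _ _ _ H) as H2. unfold p' in H2 |- *.
    rewrite <- H2 at 1. unfold q'. rewrite (ax_theta4 P q p p). rewrite ax_theta_id. reflexivity. }
  split; [split; [exact Hp'| split; [exact Hq'|]]|split; [split|split]].
  - split.
    + assert (Hq2 : delta q q' = q') by (unfold q'; apply ax_td).
      rewrite <- Hq2. unfold p' at 2. rewrite (ax_delta3 P p q q'). rewrite Hq2. symmetry; exact E1.
    + assert (Hp2 : theta p p' = p') by (symmetry; exact Hp').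
      transitivity (theta q' (theta p p')); [|rewrite Hp2; reflexivity].
      unfold q'. rewrite (ax_theta3 P q p p'). rewrite Hp2. symmetry; exact E2.
  - intro x. transitivity (theta q (theta p' x)); [symmetry; unfold p'; apply ax_theta4|].
    rewrite <- (ax_theta3 P q p' x). rewrite E2. reflexivity.
  - intro x. transitivity (delta p (delta q' x)); [symmetry; unfold q'; apply ax_delta4|].
    rewrite <- (ax_delta3 P p q' x). rewrite E1. reflexivity.
  - intros r Hpr [Hr Hq]. unfold p'.
    rewrite <- (le_dd _ _ _ q Hpr). rewrite <- Hr. apply le_bde. exact Hpr.
  - intros s [Hp Hs] Hqs. unfold q'.
    rewrite <- (le_tt _ _ _ p Hqs). rewrite <- Hs. apply le_bth. exact Hqs.
Qed.
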